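(* Let $\mathbf G$ be a power-associative loop and $\Gamma^\pm=\mathcal G^\pm(\mathbf G)$. For each connected component $\Phi$ of $\Gamma^\pm$ that contains an element of infinite order, there exist connected components $\Psi_1,\Psi_2$ of $\mathcal G^+(\mathbf G)$ such that: (1) $V(\Phi)=V(\Psi_1)\cup V(\Psi_2)$; (2) $\Psi_1\cong\Psi_2$; (3) $\Phi\cong\Psi_1\boxtimes P_2$; (4) $\Psi_1\cong\Phi/\!\equiv_{\Gamma^\pm}$.
   Context: A loop is power-associative if every subloop generated by one element is a group; powers are computed in $\langle x\rangle$. The $Z^\pm$-power graph $\mathcal G^{\pm}(\mathbf G)$ has vertex set $G$, distinct $x,y$ adjacent iff $y=x^n$ or $x=y^n$ for some $n\in\mathbb Z\setminus\{0\}$; the $N$-power graph $\mathcal G^{+}(\mathbf G)$ is defined the same way with $n$ a positive integer. $P_2$ is the path on two vertices (a single edge). The strong product $\Gamma\boxtimes\Delta$ has vertex set $V(\Gamma)\times V(\Delta)$, with distinct $(x_1,y_1),(x_2,y_2)$ adjacent iff ($x_1=x_2$ or $x_1\sim x_2$) and ($y_1=y_2$ or $y_1\sim y_2$). For a graph $\Gamma$, $x\equiv_\Gamma y$ means $x,y$ have the same closed neighborhood in $\Gamma$; $\Phi/\!\equiv_{\Gamma^\pm}$ denotes the graph whose vertices are the $\equiv_{\Gamma^\pm}$-classes contained in $V(\Phi)$, two distinct classes being adjacent iff some (equivalently every) element of one is adjacent to some (every) element of the other. *)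

(* Defs.v *)
From Stdlib Require Import ZArith Relations.

(* A loop presented equationally: multiplication, identity, left and right
   division (equivalent to unique solvability of a x = b and y a = b). *)
Record is_loop (G : Type) (mul : G -> G -> G) (e : G)
       (ldiv rdiv : G -> G -> G) : Prop := {
  loop_mul1 : forall x, mul e x = x;
  loop_mulr1 : forall x, mul x e = x;
  loop_ldivK : forall a b, mul a (ldiv a b) = b;
  loop_mulKl : forall a b, ldiv a (mul a b) = b;
  loop_rdivK : forall a b, mul (rdiv b a) a = b;
  loop_mulKr : forall a b, rdiv (mul b a) a = b
}.

Inductive gen {G : Type} (mul : G -> G -> G) (e : G) (ldiv rdiv : G -> G -> G)
  (x : G) : G -> Prop :=
| gen_x : gen mul e ldiv rdiv x x
| gen_e : gen mul e ldiv rdiv x e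
| gen_mul a b : gen mul e ldiv rdiv x a -> gen mul e ldiv rdiv x b ->
                gen mul e ldiv rdiv x (mul a b)
| gen_ldiv a b : gen mul e ldiv rdiv x a -> gen mul e ldiv rdiv x b ->
                 gen mul e ldiv rdiv x (ldiv a b)
| gen_rdiv a b : gen mul e ldiv rdiv x a -> gen mul e ldiv rdiv x b ->
                 gen mul e ldiv rdiv x (rdiv a b).

(* Power-associative: every one-generated subloop is a group (an associative
   subloop is a group). *)
Definition power_associative {G : Type} (mul : G -> G -> G) (e : G)
  (ldiv rdiv : G -> G -> G) : Prop :=
  forall x a b c, gen mul e ldiv rdiv x a -> gen mul e ldiv rdiv x b ->
    gen mul e ldiv rdiv x c -> mul (mul a b) c = mul a (mul b c).

Fixpoint npow {G : Type} (mul : G -> G -> G) (e : G) (x : G) (n : nat) : G :=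
  match n with
  | O => e
  | S m => mul (npow mul e x m) x
  end.

Definition zpow {G : Type} (mul : G -> G -> G) (e : G) (ldiv : G -> G -> G)
  (x : G) (n : Z) : G :=
  match n with
  | Z0 => e
  | Zpos p => npow mul e x (Pos.to_nat p)
  | Zneg p => ldiv (npow mul e x (Pos.to_nat p)) e
  end.

Definition infinite_order {G : Type} (mul : G -> G -> G) (e : G) (x : G) : Prop :=
  forall n : nat, (0 < n)%nat -> npow mul e x n <> e.

Record graph := Graph { vtx : Type; adj : vtx -> vtx -> Prop }.

Definition zpower_graph {G : Type} (mul : G -> G -> G) (e : G)
  (ldiv : G -> G -> G) : graph :=
  Graph G (fun x y => x <> y /\ exists n : Z, n <> 0%Z /\
            (y = zpow mul e ldiv x n \/ x = zpow mul e ldiv y n)).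

Definition npower_graph {G : Type} (mul : G -> G -> G) (e : G) : graph :=
  Graph G (fun x y => x <> y /\ exists n : nat, (0 < n)%nat /\
            (y = npow mul e x n \/ x = npow mul e y n)).

Definition connected (Γ : graph) : vtx Γ -> vtx Γ -> Prop :=
  clos_refl_trans (vtx Γ) (adj Γ).

Definition induced (Γ : graph) (P : vtx Γ -> Prop) : graph :=
  Graph {u : vtx Γ | P u} (fun a b => adj Γ (proj1_sig a) (proj1_sig b)).

Definition component (Γ : graph) (v : vtx Γ) : graph :=
  induced Γ (connected Γ v).

Definition graph_iso (Γ Δ : graph) : Prop :=
  exists (f : vtx Γ -> vtx Δ) (g : vtx Δ -> vtx Γ),
    (forall a, g (f a) = a) /\ (forall b, f (g b) = b) /\
    (forall a b, adj Γ a b <-> adj Δ (f a) (f b)).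

Definition strong_product (Γ Δ : graph) : graph :=
  Graph (vtx Γ * vtx Δ)%type
    (fun p q => p <> q /\
       (fst p = fst q \/ adj Γ (fst p) (fst q)) /\
       (snd p = snd q \/ adj Δ (snd p) (snd q))).

Definition P2 : graph := Graph bool (fun a b => a <> b).

Definition same_closed_nbhd (Γ : graph) (x y : vtx Γ) : Prop :=
  forall w, (w = x \/ adj Γ x w) <-> (w = y \/ adj Γ y w).

Definition nbhd_class (Γ : graph) (u : vtx Γ) : vtx Γ -> Prop :=
  fun w => same_closed_nbhd Γ u w.

(* Φ / ≡_Γ where Φ has vertex set {u | S u} ⊆ V(Γ): vertices are the
   ≡_Γ-classes contained in S; distinct classes adjacent iff some element of
   one is adjacent (in Γ) to some element of the other. *)
Definition quotient_graph (Γ : graph) (S : vtx Γ -> Prop) : graph :=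
  Graph {C : vtx Γ -> Prop | (exists u, C = nbhd_class Γ u) /\
                             (forall w, C w -> S w)}
    (fun C D => proj1_sig C <> proj1_sig D /\
       exists a b, proj1_sig C a /\ proj1_sig D b /\ adj Γ a b).

(* Main.v *)
Require Import Defs.
From Stdlib Require Import ZArith Relations Lia.
From Stdlib Require Import ClassicalEpsilon ProofIrrelevance FunctionalExtensionality PropExtensionality.

Section Loop.
Context {G : Type} (mul : G -> G -> G) (e : G) (ldiv rdiv : G -> G -> G)
  (HL : is_loop G mul e ldiv rdiv) (HPA : power_associative mul e ldiv rdiv).

Local Notation zp := (zpow mul e ldiv).
Local Notation np := (npow mul e).
Local Notation inv a := (ldiv a e).

Lemma mul1 a : mul e a = a. Proof. exact (loop_mul1 _ _ _ _ _ HL a). Qed.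
Lemma mulr1 a : mul a e = a. Proof. exact (loop_mulr1 _ _ _ _ _ HL a). Qed.
Lemma mulV a : mul a (inv a) = e. Proof. exact (loop_ldivK _ _ _ _ _ HL a e). Qed.
Lemma mulKl a b : ldiv a (mul a b) = b. Proof. exact (loop_mulKl _ _ _ _ _ HL a b). Qed.
Lemma lcancel a y z : mul a y = mul a z -> y = z.
Proof. intro H. rewrite <- (mulKl a y), H, mulKl. reflexivity. Qed.
Lemma inv_uniq a w : mul a w = e -> w = inv a.
Proof. intro H. rewrite <- H, mulKl. reflexivity. Qed.
Lemma np1 a : np a 1 = a. Proof. simpl. apply mul1. Qed.

Section Sub.
Variable P : G -> Prop.
Hypothesis Se : P e.
Hypothesis Smul : forall a b, P a -> P b -> P (mul a b).
Hypothesis Sldiv : forall a b, P a -> P b -> P (ldiv a b).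
Hypothesis Sas : forall a b c, P a -> P b -> P c -> mul (mul a b) c = mul a (mul b c).

Lemma Snp a n : P a -> P (np a n).
Proof. intro Ha; induction n; simpl; auto. Qed.
Lemma Szp a z : P a -> P (zp a z).
Proof. intro Ha; destruct z; simpl; auto using Snp. Qed.

Ltac smem := repeat first [assumption | apply Se | apply Smul | apply Sldiv | apply Snp | apply Szp].

Lemma mulVl a : P a -> mul (inv a) a = e.
Proof. intro Ha. apply (lcancel a). rewrite <- Sas by smem. rewrite mulV, mul1, mulr1. reflexivity. Qed.

Lemma invM b c : P b -> P c -> inv (mul b c) = mul (inv c) (inv b).
Proof. intros Hb Hc. symmetry. apply inv_uniq.
  rewrite Sas by smem. rewrite <- (Sas c) by smem. rewrite mulV, mul1, mulV. reflexivity. Qed.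

Lemma np_add a n m : P a -> np a (n + m) = mul (np a n) (np a m).
Proof. intro Ha. induction m as [|m IH].
  - rewrite Nat.add_0_r. simpl. rewrite mulr1. reflexivity.
  - rewrite Nat.add_succ_r. simpl. rewrite IH, Sas by smem. reflexivity. Qed.

Lemma zp_succ a z : P a -> zp a (Z.succ z) = mul (zp a z) a.
Proof. intro Ha. destruct z as [|p|p].
  - reflexivity.
  - replace (Z.succ (Z.pos p)) with (Z.pos (Pos.succ p)) by lia.
    cbn [zpow]. rewrite Pos2Nat.inj_succ. reflexivity.
  - destruct (Pos.succ_pred_or p) as [->| <-].
    + simpl. rewrite mul1. symmetry. apply mulVl; auto.
    + set (q := Pos.pred p).
      replace (Z.succ (Z.neg (Pos.succ q))) with (Z.neg q) by lia.
      cbn [zpow]. rewrite Pos2Nat.inj_succ.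
      assert (E : np a (S (Pos.to_nat q)) = mul a (np a (Pos.to_nat q))).
      { change (S (Pos.to_nat q)) with (1 + Pos.to_nat q)%nat.
        rewrite np_add, np1 by smem. reflexivity. }
      rewrite E, invM by smem. rewrite Sas by smem. rewrite mulVl by smem.
      rewrite mulr1. reflexivity.
Qed.

Lemma zp_pred a z : P a -> zp a (Z.pred z) = mul (zp a z) (inv a).
Proof. intro Ha. rewrite <- (Z.succ_pred z) at 2. rewrite zp_succ by smem.
  rewrite Sas by smem. rewrite mulV, mulr1. reflexivity. Qed.

Lemma zp_add a i j : P a -> zp a (i + j) = mul (zp a i) (zp a j).
Proof. intro Ha. induction j using Z.peano_ind.
  - rewrite Z.add_0_r. simpl. rewrite mulr1. reflexivity.
  - rewrite Z.add_succ_r, !zp_succ, IHj by smem. rewrite Sas by smem. reflexivity.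
  - rewrite Z.add_pred_r, !zp_pred, IHj by smem. rewrite Sas by smem. reflexivity.
Qed.

Lemma zp_opp a n : P a -> zp a (- n) = inv (zp a n).
Proof. intro Ha. apply inv_uniq. rewrite <- zp_add by smem.
  rewrite Z.add_opp_diag_r. reflexivity. Qed.

Lemma zp_mul a n k : P a -> zp (zp a n) k = zp a (n * k).
Proof. intro Ha. induction k using Z.peano_ind.
  - rewrite Z.mul_0_r. reflexivity.
  - rewrite zp_succ, IHk by smem. rewrite <- zp_add by smem. f_equal. lia.
  - rewrite zp_pred, IHk by smem. rewrite <- zp_opp by smem.
    rewrite <- zp_add by smem. f_equal. lia.
Qed.
End Sub.

Local Notation S0 a := (gen mul e ldiv rdiv a).
Lemma gS a : S0 a a. Proof. constructor. Qed.
Lemma gSe a : S0 a e. Proof. constructor. Qed.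
Lemma gSmul a : forall u v, S0 a u -> S0 a v -> S0 a (mul u v). Proof. intros; constructor; auto. Qed.
Lemma gSldiv a : forall u v, S0 a u -> S0 a v -> S0 a (ldiv u v). Proof. intros; constructor; auto. Qed.
Lemma gSas a : forall u v w, S0 a u -> S0 a v -> S0 a w -> mul (mul u v) w = mul u (mul v w).
Proof. intros; apply (HPA a); auto. Qed.

Lemma zpA a i j : zp a (i + j) = mul (zp a i) (zp a j).
Proof. exact (zp_add _ (gSe a) (gSmul a) (gSldiv a) (gSas a) a i j (gS a)). Qed.
Lemma zpM a n k : zp (zp a n) k = zp a (n * k).
Proof. exact (zp_mul _ (gSe a) (gSmul a) (gSldiv a) (gSas a) a n k (gS a)). Qed.
Lemma zpN a n : zp a (- n) = inv (zp a n).
Proof. exact (zp_opp _ (gSe a) (gSmul a) (gSldiv a) (gSas a) a n (gS a)). Qed.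
Lemma zp1 a : zp a 1 = a. Proof. apply np1. Qed.
Lemma zp0 a : zp a 0 = e. Proof. reflexivity. Qed.
Lemma zpe n : zp e n = e.
Proof. transitivity (zp (zp e 0) n); [reflexivity|]. rewrite zpM. reflexivity. Qed.
Lemma np_zp a n : np a n = zp a (Z.of_nat n).
Proof. destruct n; [reflexivity|]. simpl. rewrite SuccNat2Pos.id_succ. reflexivity. Qed.

Lemma sig_eq {A : Type} (P : A -> Prop) (a b : {u | P u}) : proj1_sig a = proj1_sig b -> a = b.
Proof. destruct a, b; simpl; intros ->; f_equal; apply proof_irrelevance. Qed.

Definition zrel a b := exists n : Z, n <> 0%Z /\ (b = zp a n \/ a = zp b n).
Definition aZ a b := a <> b /\ zrel a b.
Definition aN a b := a <> b /\ exists n : Z, (0 < n)%Z /\ (b = zp a n \/ a = zp b n).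
Definition inf a := forall z, zp a z = e -> z = 0%Z.
Definition Pc a b := exists n m, (0<n)%Z /\ (0<m)%Z /\ zp a n = zp b m.
Definition J a := zp a (-1).
Definition scn a b := forall w, (w = a \/ aZ a w) <-> (w = b \/ aZ b w).

Lemma JJ a : J (J a) = a.
Proof. unfold J. rewrite zpM. apply zp1. Qed.
Lemma J_inj a b : J a = J b -> a = b.
Proof. intro H. rewrite <- (JJ a), <- (JJ b), H. reflexivity. Qed.

Lemma zrel_sym a b : zrel a b -> zrel b a.
Proof. intros [n [Hn H]]. exists n. split; tauto. Qed.
Lemma zrel_J a b : zrel a b -> zrel (J a) b.
Proof. intros [n [Hn [H|H]]].
  - exists (-n)%Z. split; [lia|left]. unfold J. rewrite zpM, H. f_equal; lia.
  - exists (-n)%Z. split; [lia|right]. unfold J. rewrite H, zpM. f_equal; lia.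
Qed.
Lemma zrel_J' a b : zrel (J a) b -> zrel a b.
Proof. intro H. pose proof (zrel_J _ _ H) as H'. rewrite JJ in H'. exact H'. Qed.
Lemma zrel_Jr a b : zrel a b -> zrel a (J b).
Proof. intro H. apply zrel_sym, zrel_J, zrel_sym, H. Qed.
Lemma zrel_Jr' a b : zrel a (J b) -> zrel a b.
Proof. intro H. apply zrel_sym, zrel_J', zrel_sym, H. Qed.
Lemma zrel_self a : zrel a a.
Proof. exists 1%Z. split; [lia|left; symmetry; apply zp1]. Qed.
Lemma zrel_aJ a : zrel a (J a).
Proof. exists (-1)%Z. split; [lia|left; reflexivity]. Qed.

Lemma inf_of_io y : infinite_order mul e y -> inf y.
Proof. intros H z Hz. destruct z as [|p|p]; auto; exfalso.
  - apply (H (Pos.to_nat p)); [lia|exact Hz].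
  - cbn [zpow] in Hz. apply (H (Pos.to_nat p)); [lia|].
    pose proof (mulV (np y (Pos.to_nat p))) as H0. rewrite Hz, mulr1 in H0. exact H0.
Qed.

Lemma inf_inj a m n : inf a -> zp a m = zp a n -> m = n.
Proof. intros Ha H. assert (H0 : zp a (m - n) = e).
  { unfold Z.sub. rewrite zpA, H, <- zpA, Z.add_opp_diag_r. reflexivity. }
  apply Ha in H0. lia. Qed.

Lemma inf_zrel a b : inf a -> zrel a b -> inf b.
Proof. intros Ha [n [Hn [H|H]]] z Hz.
  - subst b. rewrite zpM in Hz. apply Ha in Hz. apply Z.mul_eq_0 in Hz. lia.
  - assert (H0 : zp a z = e).
    { rewrite H, zpM, Z.mul_comm, <- zpM, Hz, zpe. reflexivity. }
    apply Ha in H0. exact H0.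
Qed.

Lemma inf_neqJ a : inf a -> a <> J a.
Proof. intros Ha H. assert (H0 : zp a 1 = zp a (-1)) by (rewrite zp1; exact H).
  apply inf_inj in H0; auto. lia. Qed.

Lemma aN_aZ a b : aN a b -> aZ a b.
Proof. intros [H [n [Hn Hb]]]. split; auto. exists n. split; [lia|auto]. Qed.
Lemma aN_J a b : aN a b -> aN (J a) (J b).
Proof. intros [H [n [Hn [Hb|Hb]]]]; split.
  - intro E. apply H, J_inj, E.
  - exists n. split; auto. left. subst b. unfold J. rewrite !zpM. f_equal; lia.
  - intro E. apply H, J_inj, E.
  - exists n. split; auto. right. subst a. unfold J. rewrite !zpM. f_equal; lia.
Qed.
Lemma aN_Pc a b : aN a b -> Pc a b.
Proof. intros [H [n [Hn [Hb|Hb]]]].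
  - exists n, 1%Z. split; [auto|split; [lia|]]. rewrite zp1. auto.
  - exists 1%Z, n. split; [lia|split; [auto|]]. rewrite zp1. auto.
Qed.
Lemma Pc_refl a : Pc a a. Proof. exists 1%Z, 1%Z. split; [lia|split; [lia|reflexivity]]. Qed.
Lemma Pc_sym a b : Pc a b -> Pc b a.
Proof. intros [n [m [Hn [Hm H]]]]. exists m, n. auto. Qed.
Lemma Pc_trans a b c : Pc a b -> Pc b c -> Pc a c.
Proof. intros [n [m [Hn [Hm H1]]]] [p [q [Hp [Hq H2]]]]. exists (n*p)%Z, (q*m)%Z.
  split; [nia|split; [nia|]].
  rewrite <- zpM, H1, zpM, (Z.mul_comm m p), <- zpM, H2, zpM. reflexivity. Qed.
Lemma crt_Pc a b : clos_refl_trans G aN a b -> Pc a b.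
Proof. induction 1; eauto using aN_Pc, Pc_refl, Pc_trans. Qed.

Lemma crt_mono (R R' : G -> G -> Prop) : (forall u v, R u v -> R' u v) ->
  forall a b, clos_refl_trans G R a b -> clos_refl_trans G R' a b.
Proof. intros HR a b. induction 1; eauto using rt_step, rt_refl, rt_trans. Qed.

Lemma adjN_iff u v : adj (npower_graph mul e) u v <-> aN u v.
Proof. simpl. split.
  - intros [H [n [Hn Hb]]]. split; auto. exists (Z.of_nat n). split; [lia|].
    rewrite !np_zp in Hb. exact Hb.
  - intros [H [n [Hn Hb]]]. split; auto. exists (Z.to_nat n). split; [lia|].
    rewrite !np_zp, Z2Nat.id by lia. exact Hb.
Qed.
Lemma conN a u : connected (npower_graph mul e) a u <-> clos_refl_trans G aN a u.
Proof. split; apply crt_mono; apply adjN_iff. Qed.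
Lemma conZ a u : connected (zpower_graph mul e ldiv) a u <-> clos_refl_trans G aZ a u.
Proof. split; intro H; exact H. Qed.

Lemma scn_refl a : scn a a. Proof. intro w; tauto. Qed.
Lemma scn_sym a b : scn a b -> scn b a. Proof. intros H w; specialize (H w); tauto. Qed.
Lemma scn_trans a b c : scn a b -> scn b c -> scn a c.
Proof. intros H1 H2 w; specialize (H1 w); specialize (H2 w); tauto. Qed.

Lemma no_scn_aux a n m : inf a -> m <> 1%Z -> m <> 0%Z -> m <> n ->
  (forall k, m <> n*k)%Z -> (forall k, n <> m*k)%Z -> ~ scn a (zp a n).
Proof. intros Ha h1 h0 hn hk1 hk2 H.
  destruct (proj1 (H (zp a m))) as [E|[_ [k [_ [E|E]]]]].
  - right. split.
    + intro E. assert (H0 : zp a 1 = zp a m) by (rewrite zp1; exact E).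
      apply inf_inj in H0; auto.
    + exists m. split; auto.
  - apply inf_inj in E; auto.
  - rewrite zpM in E. apply inf_inj in E; auto. exact (hk1 k E).
  - rewrite zpM in E. apply inf_inj in E; auto. exact (hk2 k E).
Qed.

Lemma no_scn a n : inf a -> n <> 0%Z -> n <> 1%Z -> n <> (-1)%Z -> ~ scn a (zp a n).
Proof. intros Ha H0 H1 H2. destruct (Z_lt_le_dec 0 n).
  - apply (no_scn_aux a n (n+1)); auto; try lia; intros k Hk;
      destruct (Z.le_gt_cases k 0); try nia; destruct (Z.le_gt_cases k 1); nia.
  - apply (no_scn_aux a n (n-1)); auto; try lia; intros k Hk;
      destruct (Z.le_gt_cases k 0); try nia; destruct (Z.le_gt_cases k 1); nia.
Qed.

Lemma scn_J a : inf a -> scn a (J a).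
Proof. intros Ha w. split.
  - intros [E|E].
    + subst w. right. split.
      * intro E. apply (inf_neqJ a Ha). auto.
      * apply zrel_J, zrel_self.
    + destruct (classic (w = J a)) as [E'|E']; [left; auto|right].
      split; [congruence|apply zrel_J; exact (proj2 E)].
  - intros [E|E].
    + subst w. right. split; [apply inf_neqJ; auto|apply zrel_aJ].
    + destruct (classic (w = a)) as [E'|E']; [left; auto|right].
      split; [congruence|apply zrel_J'; exact (proj2 E)].
Qed.

Lemma scn_cases u w : inf u -> scn u w -> w = u \/ w = J u.
Proof. intros Hu H. destruct (proj1 (H u) (or_introl eq_refl)) as [E|[Hne Zr]].
  { left; auto. }
  destruct Zr as [n [Hn [E|E]]].
  - assert (Hw : inf w) by (apply (inf_zrel u w Hu); apply zrel_sym; exists n; auto).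
    destruct (Z.eq_dec n 1) as [->|n1].
    { rewrite zp1 in E. left; auto. }
    destruct (Z.eq_dec n (-1)) as [->|n2].
    { right. rewrite E. change (w = J (J w)). rewrite JJ. reflexivity. }
    exfalso. apply (no_scn w n Hw Hn n1 n2). rewrite <- E. apply scn_sym; auto.
  - destruct (Z.eq_dec n 1) as [->|n1].
    { rewrite zp1 in E. left; auto. }
    destruct (Z.eq_dec n (-1)) as [->|n2].
    { right. exact E. }
    exfalso. apply (no_scn u n Hu Hn n1 n2). rewrite <- E. exact H.
Qed.

Section Main.
Variable x : G.
Hypothesis Hx : inf x.
Local Notation Gp := (npower_graph mul e).
Local Notation Gpm := (zpower_graph mul e ldiv).
Definition Ps1 u := clos_refl_trans G aN x u.
Definition Ps2 u := clos_refl_trans G aN (J x) u.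
Definition Phi u := clos_refl_trans G aZ x u.

Lemma notPc : ~ Pc x (J x).
Proof. intros [n [m [Hn [Hm H]]]]. unfold J in H. rewrite zpM in H.
  apply inf_inj in H; auto. lia. Qed.
Lemma disj' a b : Ps1 a -> Ps2 b -> ~ Pc a b.
Proof. intros H1 H2 H. apply notPc. apply crt_Pc in H1. apply crt_Pc in H2.
  eauto using Pc_trans, Pc_sym. Qed.
Lemma disj u : Ps1 u -> Ps2 u -> False.
Proof. intros H1 H2. apply (disj' u u H1 H2), Pc_refl. Qed.
Lemma crt_J a u : clos_refl_trans G aN a u -> clos_refl_trans G aN (J a) (J u).
Proof. induction 1; eauto using rt_step, rt_refl, rt_trans, aN_J. Qed.
Lemma Ps1_J u : Ps1 u -> Ps2 (J u). Proof. apply crt_J. Qed.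
Lemma Ps2_J u : Ps2 u -> Ps1 (J u).
Proof. intro H. apply crt_J in H. unfold Ps1. rewrite JJ in H. exact H. Qed.

Lemma side u v : aZ u v -> clos_refl_trans G aN u v \/ clos_refl_trans G aN (J u) v.
Proof. intros [H [n [Hn [Hb|Hb]]]]; destruct (Z_lt_le_dec 0 n).
  - left. apply rt_step. split; auto. exists n; auto.
  - right. destruct (classic (J u = v)) as [E|E]. { rewrite E; apply rt_refl. }
    apply rt_step. split; auto. exists (-n)%Z. split; [lia|left].
    subst v. unfold J. rewrite zpM. f_equal; lia.
  - left. apply rt_step. split; auto. exists n; auto.
  - right. destruct (classic (J u = v)) as [E|E]. { rewrite E; apply rt_refl. }
    apply rt_step. split; auto. exists (-n)%Z. split; [lia|right].
    subst u. unfold J. rewrite zpM. f_equal; lia.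
Qed.

Lemma Phi_split u : Phi u -> Ps1 u \/ Ps2 u.
Proof. intro H. apply clos_rt_rtn1 in H. induction H as [|y z H H0 IH].
  - left; apply rt_refl.
  - destruct (side y z H) as [S1|S1]; destruct IH as [I|I].
    + left; eapply rt_trans; eauto.
    + right; eapply rt_trans; eauto.
    + right; eapply rt_trans; [apply Ps1_J; exact I | exact S1].
    + left; eapply rt_trans; [apply Ps2_J; exact I | exact S1].
Qed.
Lemma Ps1_Phi u : Ps1 u -> Phi u. Proof. apply crt_mono; apply aN_aZ. Qed.
Lemma Ps2_Phi u : Ps2 u -> Phi u.
Proof. intro H. eapply rt_trans; [apply rt_step| apply (crt_mono _ _ aN_aZ _ _ H)].
  split; [apply inf_neqJ; auto | apply zrel_aJ]. Qed.
Lemma crt_inf a b : clos_refl_trans G aZ a b -> inf a -> inf b.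
Proof. induction 1; auto. intro Ha. destruct H as [_ Hz]. eapply inf_zrel; eauto. Qed.
Lemma Phi_inf u : Phi u -> inf u. Proof. intro H. apply (crt_inf x u H Hx). Qed.

Lemma zrel_psi u v : Ps1 u -> Ps1 v -> u <> v -> zrel u v -> aN u v.
Proof. intros H1 H2 Hne [n [Hn [Hb|Hb]]]; destruct (Z_lt_le_dec 0 n).
  - split; auto. exists n; auto.
  - exfalso. apply (disj' v (J u) H2 (Ps1_J u H1)). exists 1%Z, (-n)%Z.
    split; [lia|split; [lia|]]. rewrite zp1. subst v. unfold J. rewrite zpM. f_equal; lia.
  - split; auto. exists n; auto.
  - exfalso. apply (disj' v (J u) H2 (Ps1_J u H1)). exists (-n)%Z, 1%Z.
    split; [lia|split; [lia|]]. rewrite zp1. subst u. unfold J. rewrite zpM. f_equal; lia.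
Qed.

Lemma cJ u : connected Gpm x u -> ~ connected Gp x u -> connected Gp x (J u).
Proof. intros H N. apply conN. apply conZ in H. destruct (Phi_split u H) as [A|A].
  - exfalso. apply N, conN, A.
  - apply Ps2_J, A. Qed.
Lemma c12 u : connected Gp x u -> connected Gp (J x) (J u).
Proof. intro H. apply conN. apply Ps1_J. apply conN, H. Qed.
Lemma c21 u : connected Gp (J x) u -> connected Gp x (J u).
Proof. intro H. apply conN. apply Ps2_J. apply conN, H. Qed.

Lemma iso12 : graph_iso (component Gp x) (component Gp (J x)).
Proof.
  exists (fun a => exist _ (J (proj1_sig a)) (c12 _ (proj2_sig a))).
  exists (fun b => exist _ (J (proj1_sig b)) (c21 _ (proj2_sig b))).
  split; [|split].
  - intros [u Hu]. apply sig_eq. simpl. apply JJ.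
  - intros [u Hu]. apply sig_eq. simpl. apply JJ.
  - intros [u Hu] [v Hv]. simpl. change (adj Gp u v <-> adj Gp (J u) (J v)). rewrite !adjN_iff. split; intro H.
    + apply aN_J; auto.
    + rewrite <- (JJ u), <- (JJ v). apply aN_J; auto.
Qed.

Definition gval (p : {u | connected Gp x u} * bool) : G :=
  if snd p then proj1_sig (fst p) else J (proj1_sig (fst p)).
Lemma gval_ok p : connected Gpm x (gval p).
Proof. destruct p as [[u Hu] []]; simpl; apply conZ.
  - apply Ps1_Phi, conN, Hu.
  - apply Ps2_Phi, Ps1_J, conN, Hu. Qed.
Definition gmap p : {u | connected Gpm x u} := exist _ (gval p) (gval_ok p).
Definition fmap (a : {u | connected Gpm x u}) : {u | connected Gp x u} * bool :=
  match excluded_middle_informative (connected Gp x (proj1_sig a)) with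
  | left H => (exist _ (proj1_sig a) H, true)
  | right H => (exist _ (J (proj1_sig a)) (cJ _ (proj2_sig a) H), false)
  end.
Lemma gf a : gmap (fmap a) = a.
Proof. destruct a as [u Hu]. apply sig_eq. unfold fmap; simpl.
  destruct (excluded_middle_informative _); simpl; [reflexivity|apply JJ]. Qed.
Lemma fg p : fmap (gmap p) = p.
Proof. destruct p as [[u Hu] b]. destruct b; unfold fmap, gmap, gval; simpl;
  destruct (excluded_middle_informative _) as [H|H].
  - f_equal. apply sig_eq. reflexivity.
  - contradiction.
  - exfalso. apply (disj (J u)); [apply conN, H| apply Ps1_J, conN, Hu].
  - f_equal. apply sig_eq. simpl. apply JJ.
Qed.
Lemma gval_inj p q : gval p = gval q <-> p = q.
Proof. split; [|intros ->; reflexivity]. intro E.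
  rewrite <- (fg p), <- (fg q). f_equal. apply sig_eq. exact E. Qed.
Lemma zrel_sig (s t : bool) (u v : G) : zrel (if s then u else J u) (if t then v else J v) <-> zrel u v.
Proof. destruct s, t; split; intro H.
  all: first [exact H | apply zrel_Jr'; exact H | apply zrel_Jr; exact H
    | apply zrel_J'; exact H | apply zrel_J; exact H
    | apply zrel_J', zrel_Jr'; exact H | apply zrel_J, zrel_Jr; exact H]. Qed.
Lemma psi_iff u v (Hu : connected Gp x u) (Hv : connected Gp x v) :
  zrel u v <-> (exist _ u Hu = exist (connected Gp x) v Hv \/ adj Gp u v).
Proof. split.
  - intro Z. destruct (classic (u = v)) as [E|E].
    + left. apply sig_eq. exact E.
    + right. apply adjN_iff. apply zrel_psi; auto; apply conN; auto.
  - intros [E|A].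
    + apply (f_equal (@proj1_sig _ _)) in E. simpl in E. subst. apply zrel_self.
    + apply adjN_iff in A. apply aN_aZ in A. exact (proj2 A).
Qed.
Lemma gadj p q : adj (component Gpm x) (gmap p) (gmap q) <->
  adj (strong_product (component Gp x) P2) p q.
Proof.
  pose proof (gval_inj p q) as GI.
  destruct p as [[u Hu] s], q as [[v Hv] t].
  pose proof (zrel_sig s t u v) as ZS.
  pose proof (psi_iff u v Hu Hv) as PI.
  unfold gval in GI. simpl in *. unfold zrel in *.
  destruct (Bool.bool_dec s t); tauto.
Qed.
Lemma iso3 : graph_iso (component Gpm x) (strong_product (component Gp x) P2).
Proof. exists fmap, gmap. split; [exact gf|split; [exact fg|]].
  intros a b. rewrite <- gadj, !gf. reflexivity. Qed.

Local Notation Q := (quotient_graph Gpm (connected Gpm x)).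

Lemma Fok u : connected Gp x u ->
  (exists w, nbhd_class Gpm u = nbhd_class Gpm w) /\
  (forall w, nbhd_class Gpm u w -> connected Gpm x w).
Proof. intro Hu. split; [exists u; reflexivity|]. intros w Hw.
  change (scn u w) in Hw. apply conZ.
  destruct (proj2 (Hw w) (or_introl eq_refl)) as [E|A].
  - subst. apply Ps1_Phi, conN, Hu.
  - eapply rt_trans; [apply Ps1_Phi, conN, Hu| apply rt_step, A].
Qed.
Definition Fmap (a : {u | connected Gp x u}) : vtx Q :=
  exist _ (nbhd_class Gpm (proj1_sig a)) (Fok _ (proj2_sig a)).
Definition wC (C : vtx Q) : G :=
  proj1_sig (constructive_indefinite_description _ (proj1 (proj2_sig C))).
Lemma wC_eq (C : vtx Q) : proj1_sig C = nbhd_class Gpm (wC C).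
Proof. exact (proj2_sig (constructive_indefinite_description _ (proj1 (proj2_sig C)))). Qed.
Lemma wC_Phi (C : vtx Q) : connected Gpm x (wC C).
Proof. apply (proj2 (proj2_sig C)). rewrite wC_eq. exact (scn_refl (wC C)). Qed.
Definition Gmap (C : vtx Q) : {u | connected Gp x u} :=
  match excluded_middle_informative (connected Gp x (wC C)) with
  | left H => exist _ (wC C) H
  | right H => exist _ (J (wC C)) (cJ _ (wC_Phi C) H)
  end.
Lemma class_eq a b : scn a b -> nbhd_class Gpm a = nbhd_class Gpm b.
Proof. intro H. apply functional_extensionality. intro w.
  apply propositional_extensionality. change (scn a w <-> scn b w).
  split; intro H'; eauto using scn_trans, scn_sym. Qed.
Lemma class_scn a b : nbhd_class Gpm a = nbhd_class Gpm b -> scn a b.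
Proof. intro E. assert (H : nbhd_class Gpm b b) by exact (scn_refl b).
  rewrite <- E in H. exact H. Qed.

Lemma GF a : Gmap (Fmap a) = a.
Proof. destruct a as [u Hu].
  assert (Hs : scn u (wC (Fmap (exist _ u Hu)))).
  { apply class_scn. rewrite <- wC_eq. reflexivity. }
  assert (Hi : inf u) by (apply Phi_inf, Ps1_Phi, conN, Hu).
  destruct (scn_cases u _ Hi Hs) as [E|E]; unfold Gmap;
    destruct (excluded_middle_informative _) as [H|H]; apply sig_eq; simpl.
  all: first [change (wC (Fmap (exist (fun u0 : vtx Gp => connected Gp x u0) u Hu)) = u) in E | change (wC (Fmap (exist (fun u0 : vtx Gp => connected Gp x u0) u Hu)) = J u) in E].
  - exact E.
  - exfalso. apply H. rewrite E. exact Hu.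
  - exfalso. rewrite E in H. apply (disj (J u)); [apply conN, H| apply Ps1_J, conN, Hu].
  - transitivity (J (J u)); [f_equal; exact E| apply JJ].
Qed.
Lemma FG C : Fmap (Gmap C) = C.
Proof. apply sig_eq. rewrite (wC_eq C). unfold Gmap.
  destruct (excluded_middle_informative _); simpl; [reflexivity|].
  apply class_eq. apply scn_sym. apply scn_J. apply Phi_inf, conZ, wC_Phi. Qed.
Lemma Fadj a b : adj (component Gp x) a b <-> adj Q (Fmap a) (Fmap b).
Proof. destruct a as [u Hu], b as [v Hv].
  change (adj Gp u v <-> (nbhd_class Gpm u <> nbhd_class Gpm v /\
     exists a' b', nbhd_class Gpm u a' /\ nbhd_class Gpm v b' /\ aZ a' b')).
  rewrite adjN_iff.
  assert (Hiu : inf u) by (apply Phi_inf, Ps1_Phi, conN, Hu).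
  assert (Hiv : inf v) by (apply Phi_inf, Ps1_Phi, conN, Hv).
  split.
  - intro A. split.
    + intro E. apply class_scn in E. destruct (scn_cases u v Hiu E) as [E'|E'].
      * destruct A as [Hne _]. auto.
      * apply (disj v); [apply conN, Hv|]. rewrite E'. apply Ps1_J, conN, Hu.
    + exists u, v. split; [exact (scn_refl u)|split; [exact (scn_refl v)|apply aN_aZ, A]].
  - intros [Hne [a' [b' [Ha [Hb Hab]]]]].
    change (scn u a') in Ha. change (scn v b') in Hb.
    assert (Huv : u <> v) by (intro; subst; apply Hne; reflexivity).
    apply zrel_psi; auto; try (apply conN; auto).
    destruct Hab as [_ Z].
    destruct (scn_cases u a' Hiu Ha) as [->| ->];
    destruct (scn_cases v b' Hiv Hb) as [->| ->].
    + exact Z.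
    + apply zrel_Jr'; exact Z.
    + apply zrel_J'; exact Z.
    + apply zrel_J', zrel_Jr'; exact Z.
Qed.
Lemma iso4 : graph_iso (component Gp x) Q.
Proof. exists Fmap, Gmap. split; [exact GF|split; [exact FG|exact Fadj]]. Qed.

Theorem main_sec :
  let Gpm := zpower_graph mul e ldiv in
  let Gp := npower_graph mul e in
  exists y1 y2 : G,
    (forall u : G, connected Gpm x u <-> (connected Gp y1 u \/ connected Gp y2 u)) /\
    graph_iso (component Gp y1) (component Gp y2) /\
    graph_iso (component Gpm x) (strong_product (component Gp y1) P2) /\
    graph_iso (component Gp y1) (quotient_graph Gpm (connected Gpm x)).
Proof. cbv zeta. exists x, (J x). split; [|split; [exact iso12|split; [exact iso3|exact iso4]]].
  intro u. rewrite conZ, !conN. split.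
  - apply Phi_split.
  - intros [A|A]; [apply Ps1_Phi, A|apply Ps2_Phi, A].
Qed.

End Main.
End Loop.

Theorem mainTheorem4 (G : Type) (mul : G -> G -> G) (e : G)
  (ldiv rdiv : G -> G -> G)
  (HL : is_loop G mul e ldiv rdiv)
  (HPA : power_associative mul e ldiv rdiv)
  (x : G) (Hx : infinite_order mul e x) :
  let Gpm := zpower_graph mul e ldiv in
  let Gp := npower_graph mul e in
  exists y1 y2 : G,
    (forall u : G, connected Gpm x u <-> (connected Gp y1 u \/ connected Gp y2 u)) /\
    graph_iso (component Gp y1) (component Gp y2) /\
    graph_iso (component Gpm x) (strong_product (component Gp y1) P2) /\
    graph_iso (component Gp y1) (quotient_graph Gpm (connected Gpm x)).
Proof.
  exact (main_sec mul e ldiv rdiv HL HPA x (inf_of_io mul e ldiv rdiv HL x Hx)).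
Qed.
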